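(* Let pieces have length $a=2$. There is a bijective correspondence between pyramids of size $m\geq 1$ (with bottom piece covering $]0,2[$) and finite sequences $(p_1,p_2,\dots,p_r)$, $r\geq 1$, of pyramids such that $p_i$ is a right $0$-pyramid if $i$ is odd and a left $1$-pyramid if $i$ is even, and such that $|p_1|+\dots+|p_r|=m$.
   Context: A piece is an open interval $]s,s+a[$ of the real line with $s\in\mathbb Z$ (here $a=2$, so pieces are dimers); two pieces are concurrent iff their intervals intersect. A heap (in the sense of Viennot) is a finite configuration obtained by successively dropping pieces vertically towards the horizontal axis: each dropped piece comes to rest either on the axis or on top of the highest previously placed piece whose interval intersects its own; two dropping orders give the same heap iff they produce the same configuration. A heap is a pyramid if it has a unique bottom (minimal) piece, i.e. exactly one piece rests on the axis. The size $|p|$ is the number of pieces. A pyramid $p$ is a right $s$-pyramid if its bottom piece covers $]s,s+a[$ and is a leftmost piece of $p$ (no piece of $p$ covers $]t,t+a[$ with $t<s$). It is a left $s$-pyramid if its bottom piece covers $]s-a,s[$ and is a rightmost piece of $p$ (no piece of $p$ covers $]t-a,t[$ with $t>s$). *)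

(* Defs.v *)
From HB Require Import structures.
From mathcomp Require Import all_boot all_order all_algebra.
From mathcomp Require Import finmap.
Set Implicit Arguments. Unset Strict Implicit. Unset Printing Implicit Defensive.
Import Order.TTheory GRing.Theory Num.Theory.
Local Open Scope fset_scope.
Local Open Scope ring_scope.

Definition a : int := 2.

(* A piece at position s covers the open interval ]s, s+a[.  Two pieces are
   concurrent iff their open intervals intersect. *)
Definition concurrent (s t : int) : bool := (s < t + a) && (t < s + a).

(* A placed piece is a pair (position, level); level 0 = resting on the axis. *)
Definition placed := (int * nat)%type.

Definition drop_level (C : seq placed) (s : int) : nat :=
  (\max_(p <- C | concurrent p.1 s) p.2.+1)%N.

Definition drop_all (w : seq int) : seq placed :=
  foldl (fun C s => (s, drop_level C s) :: C) [::] w.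

Definition heap_of (w : seq int) : {fset placed} := [fset x | x in drop_all w].

Definition is_heap (H : {fset placed}) : Prop := exists w : seq int, heap_of w = H.

Definition hsize (H : {fset placed}) : nat := #|` H|.

(* Pyramid: a heap with exactly one piece resting on the axis
   (i.e. a unique minimal piece). *)
Definition is_pyramid (H : {fset placed}) : Prop :=
  is_heap H /\ #|` [fset x in H | x.2 == 0%N]| = 1%N.

Definition bottom_at (H : {fset placed}) (s : int) : bool := (s, 0%N) \in H.

Definition right_pyramid (s : int) (H : {fset placed}) : Prop :=
  is_pyramid H /\ bottom_at H s /\ (forall x, x \in H -> s <= x.1).

Definition left_pyramid (s : int) (H : {fset placed}) : Prop :=
  is_pyramid H /\ bottom_at H (s - a) /\ (forall x, x \in H -> x.1 + a <= s).

Definition pyr0 (m : nat) (H : {fset placed}) : Prop :=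
  is_pyramid H /\ bottom_at H 0 /\ hsize H = m.

(* Sequences (p_1,...,p_r), r >= 1, p_i right 0-pyramid for i odd, left
   1-pyramid for i even (1-indexed), with total size m.  Index i (0-based in
   nth) corresponds to p_{i+1}. *)
Definition good_seq (m : nat) (ps : seq {fset placed}) : Prop :=
  (1 <= size ps)%N /\
  (forall i : nat, (i < size ps)%N ->
     if odd i.+1 then right_pyramid 0 (nth fset0 ps i)
     else left_pyramid 1 (nth fset0 ps i)) /\
  sumn (map hsize ps) = m.

(* Main.v *)
Require Import Defs.
From HB Require Import structures.
From mathcomp Require Import all_boot all_order all_algebra.
From mathcomp Require Import finmap.
From mathcomp Require Import zify.
From Stdlib Require Import ClassicalDescription IndefiniteDescription.
Set Implicit Arguments. Unset Strict Implicit. Unset Printing Implicit Defensive.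
Local Open Scope fset_scope.

Lemma concC s t : concurrent s t = concurrent t s.
Proof. by rewrite /concurrent andbC. Qed.

Lemma concxx s : concurrent s s.
Proof. rewrite /concurrent /a; apply/andP; split; lia. Qed.

Definition step (C : seq placed) (s : int) : seq placed := (s, drop_level C s) :: C.

Fixpoint newsr (C : seq placed) (w : seq int) : seq placed :=
  match w with
  | [::] => [::]
  | s :: w' => (s, drop_level C s) :: newsr ((s, drop_level C s) :: C) w'
  end.

Lemma foldl_newsr C w : foldl step C w = rev (newsr C w) ++ C.
Proof.
elim: w C => [|s w IH] C //=. by rewrite IH rev_cons cat_rcons.
Qed.

Lemma mem_heap_of w x : (x \in heap_of w) = (x \in newsr [::] w).
Proof.
rewrite /heap_of /drop_all inE.
have -> : foldl (fun C s => (s, drop_level C s) :: C) [::] w = foldl step [::] w by [].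
by rewrite foldl_newsr cats0 mem_rev.
Qed.

Lemma newsr_cat C u v :
  newsr C (u ++ v) = newsr C u ++ newsr (rev (newsr C u) ++ C) v.
Proof.
elim: u C => [|s u IH] C //=. by rewrite IH rev_cons cat_rcons.
Qed.

Lemma size_newsr C w : size (newsr C w) = size w.
Proof. by elim: w C => [|s w IH] C //=; rewrite IH. Qed.

Lemma map_fst_newsr C w : map fst (newsr C w) = w.
Proof. by elim: w C => [|s w IH] C //=; rewrite IH. Qed.

Lemma dl_cons p C s : drop_level (p :: C) s =
  if concurrent p.1 s then maxn p.2.+1 (drop_level C s) else drop_level C s.
Proof. by rewrite /drop_level big_cons. Qed.

Lemma dl_perm C C' s : perm_eq C C' -> drop_level C s = drop_level C' s.
Proof. by move=> h; rewrite /drop_level (perm_big _ h). Qed.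

Lemma dl_cat_nc C L s : (forall z, z \in L -> ~~ concurrent z.1 s) ->
  drop_level (C ++ L) s = drop_level C s.
Proof.
rewrite /drop_level big_cat /= => h.
rewrite [X in maxn _ X]big1_seq ?maxn0 // => z /andP [hc hz].
by move: (h z hz); rewrite hc.
Qed.

Lemma dl_gt C s z : z \in C -> concurrent z.1 s -> z.2 < drop_level C s.
Proof.
elim: C => [|p C IH] //=; rewrite inE dl_cons => /orP [/eqP -> ->|hz hc].
  by rewrite leq_max ltnSn.
case: ifP => _; last exact: IH.
by rewrite leq_max (IH hz hc) orbT.
Qed.

Lemma dl_pos C s : (0 < drop_level C s) = has (fun p => concurrent p.1 s) C.
Proof.
elim: C => [|p C IH] /=; first by rewrite /drop_level big_nil.
rewrite dl_cons; case: ifP => //= _.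
by rewrite leq_max.
Qed.

Lemma dl_support C s : 0 < drop_level C s ->
  exists2 z, z \in C & concurrent z.1 s /\ z.2.+1 = drop_level C s.
Proof.
elim: C => [|p C IH] /=; first by rewrite /drop_level big_nil.
rewrite dl_cons; case: ifP => hc.
  case: (leqP (drop_level C s) p.2.+1) => hm.
    move=> _; exists p; first exact: mem_head.
    by split=> //; rewrite (maxn_idPl hm).
  move=> _; have [z hz [h1 h2]] := IH (leq_ltn_trans (leq0n _) hm).
  exists z; first by rewrite inE hz orbT.
  by split=> //; rewrite h2 (maxn_idPr (ltnW hm)).
by move/IH => [z hz hh]; exists z; rewrite // inE hz orbT.
Qed.

Definition Rel (x y : placed) : bool := concurrent x.1 y.1 ==> (x.2 < y.2).

Lemma Rel_irr x : Rel x x = false.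
Proof. by rewrite /Rel concxx ltnn. Qed.

Lemma pw_uniq s : pairwise Rel s -> uniq s.
Proof.
move=> h; rewrite uniq_pairwise; apply: sub_pairwise h => x y hr.
by apply/eqP=> e; move: hr; rewrite e Rel_irr.
Qed.

Lemma pw_either (T : eqType) (r : rel T) s x y : pairwise r s -> x \in s -> y \in s -> x != y ->
  r x y || r y x.
Proof.
elim: s => [|z s IH] //=; rewrite !inE => /andP [/allP ha hp].
move=> /orP [/eqP ->|hx] /orP [/eqP ->|hy] hne.
- by rewrite eqxx in hne.
- by rewrite ha.
- by rewrite ha ?orbT.
- exact: IH.
Qed.

Lemma pw_conc_lt s x y : pairwise Rel s -> x \in s -> y \in s -> x != y ->
  concurrent x.1 y.1 -> x.2 != y.2.
Proof.
move=> hp hx hy hne hc; have := pw_either hp hx hy hne.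
rewrite /Rel hc concC hc /= => /orP [] h; apply/eqP => e; move: h; rewrite e ltnn //.
Qed.

Definition valid (C T : seq placed) :=
  forall y, y \in T -> (forall z, z \in C -> concurrent z.1 y.1 -> z.2 < y.2) /\
    y.2 = drop_level (C ++ [seq z <- T | z.2 < y.2]) y.1.

Lemma valid_perm C T T' : perm_eq T T' -> valid C T -> valid C T'.
Proof.
move=> hp hv y; rewrite -(perm_mem hp) => /hv [h1 h2]; split=> //.
rewrite {1}h2; apply: dl_perm; rewrite perm_cat2l; exact: perm_filter.
Qed.

Lemma shift p C L y : Rel p y ->
  drop_level ((p :: C) ++ [seq z <- L | z.2 < y.2]) y.1 =
  drop_level (C ++ [seq z <- p :: L | z.2 < y.2]) y.1.
Proof.
move=> hr /=; case: ifP => hl.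
  apply: dl_perm; by rewrite -cat1s perm_catCA.
rewrite dl_cons; case: ifP => // hc.
by move: hr; rewrite /Rel hc hl.
Qed.

Lemma newsr_valid C w : valid C (newsr C w) /\ pairwise Rel (newsr C w).
Proof.
elim: w C => [|s w IH] C /=; first by split.
set p := (s, drop_level C s); have [hv hp] := IH (p :: C).
have hall : all (Rel p) (newsr (p :: C) w).
  apply/allP=> y hy; have [h1 _] := hv y hy; apply/implyP => hc.
  exact: h1 (mem_head _ _) hc.
split; last by rewrite hp hall.
move=> y; rewrite inE => /orP [/eqP ->|hy].
  split; first by move=> z hz hc; exact: dl_gt.
  rewrite /= ltnn dl_cat_nc // => z; rewrite mem_filter => /andP [hz hy].
  apply/negP=> hc; move/allP: hall => /(_ z hy).
  by rewrite /Rel concC hc /= => hlt; move: (ltn_trans hz hlt); rewrite ltnn.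
have [h1 h2] := hv y hy; split.
  by move=> z hz; apply: h1; rewrite inE hz orbT.
by rewrite {1}h2 shift //; exact: (allP hall y hy).
Qed.

Lemma mem_body (x : placed) t T : x \in T -> x \in t :: T.
Proof. by rewrite inE => ->; rewrite orbT. Qed.

Lemma valid_newsr C T : valid C T -> pairwise Rel T -> newsr C (map fst T) = T.
Proof.
elim: T C => [|t T IH] C //= hv /andP [hall hp].
have [_ ht] := hv t (mem_head _ _).
have e : drop_level C t.1 = t.2.
  rewrite ht /= ltnn dl_cat_nc // => z; rewrite mem_filter => /andP [hz hy].
  apply/negP=> hc; move/allP: hall => /(_ z hy).
  by rewrite /Rel concC hc /= => hlt; move: (ltn_trans hz hlt); rewrite ltnn.
rewrite e -surjective_pairing IH //.
move=> y hy; have [h1 h2] : _ /\ _ := hv y (mem_body t hy); split.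
  move=> z; rewrite inE => /orP [/eqP -> hc|]; last exact: h1.
  by move/allP: hall => /(_ y hy); rewrite /Rel hc.
by rewrite {1}h2 -shift //; exact: (allP hall y hy).
Qed.


Lemma nth_newsr C w i d : i < size w ->
  nth d (newsr C w) i = (nth 0%R w i, drop_level (rev (take i (newsr C w)) ++ C) (nth 0%R w i)).
Proof.
elim: w C i => [|s w IH] C [|i] //= hi.
by rewrite IH // rev_cons cat_rcons.
Qed.

Lemma lvl_pos C w i d : i < size w ->
  (0 < (nth d (newsr C w) i).2) =
  has (fun t => concurrent t (nth 0%R w i)) (take i w) || has (fun p => concurrent p.1 (nth 0%R w i)) C.
Proof.
move=> hi; rewrite nth_newsr //= dl_pos has_cat has_rev.
congr (_ || _).
have -> : take i w = map fst (take i (newsr C w)) by rewrite map_take map_fst_newsr.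
by rewrite has_map.
Qed.

Lemma map_index_nth (T : eqType) (A B : seq T) : uniq A -> size A = size B ->
  map (fun a => nth a B (index a A)) A = B.
Proof.
move=> hu hs; case: A hu hs => [|x0 A'] hu hs; first by case: B hs.
apply: (@eq_from_nth _ x0); rewrite ?size_map // => i hi.
rewrite (nth_map x0) // index_uniq //; apply: set_nth_default; by rewrite -hs.
Qed.

Lemma TR C1 C2 v1 v2 : newsr C1 v1 =i newsr C1 v2 -> newsr C2 v1 =i newsr C2 v2.
Proof.
move=> hA.
set A1 := newsr C1 v1; set A2 := newsr C1 v2; set B1 := newsr C2 v1.
have [_ pA1] := newsr_valid C1 v1; have [_ pA2] := newsr_valid C1 v2.
have [vB1 pB1] := newsr_valid C2 v1.
have uA1 := pw_uniq pA1; have uA2 := pw_uniq pA2.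
have pe : perm_eq A2 A1 by apply: uniq_perm => // x; rewrite hA.
pose phi a := nth a B1 (index a A1).
have sz : size A1 = size B1 by rewrite /A1 /B1 !size_newsr.
have mB : map phi A1 = B1 by apply: map_index_nth.
have fphi : forall a, a \in A1 -> (phi a).1 = a.1.
  move=> a ha; rewrite /phi; set i := index a A1.
  have hi : i < size A1 by rewrite index_mem.
  rewrite -(nth_map a a.1 fst); last by rewrite -sz.
  rewrite -{2}(nth_index a ha) -(nth_map a a.1 fst) //.
  by rewrite /B1 /A1 !map_fst_newsr.
set T := map phi A2.
have pT : perm_eq T B1 by rewrite -mB; apply: perm_map.
have fT : map fst T = v2.
  rewrite /T -map_comp -(map_fst_newsr C1 v2); apply/eq_in_map => x hx /=.
  by apply: fphi; rewrite hA.
have vT : valid C2 T by apply: valid_perm vB1; rewrite perm_sym.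
have pw2 : pairwise (fun x y => Rel x y && Rel (phi x) (phi y)) A1.
  by rewrite pairwise_relI pA1 -pairwise_map mB pB1.
have rT : pairwise Rel T.
  rewrite /T pairwise_map; apply: (@sub_in_pairwise _ (mem A1) Rel); last first.
  - by [].
  - by apply/allP => x; rewrite (perm_mem pe).
  move=> x y hx hy; rewrite /Rel /= (fphi x hx) (fphi y hy) => /implyP h.
  apply/implyP => hc; have hlt := h hc.
  have hne : x != y by apply/eqP => e; move: hlt; rewrite e ltnn.
  move: (pw_either pw2 hx hy hne); rewrite /Rel (fphi x hx) (fphi y hy) hc concC hc /=.
  move=> /orP [/andP [_ //]|/andP [hh _]].
  by move: (ltn_trans hh hlt); rewrite ltnn.
have e : newsr C2 v2 = T by rewrite -fT valid_newsr.
by move=> x; rewrite e (perm_mem pT).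
Qed.


Lemma drop_all_newsr w : drop_all w = rev (newsr [::] w).
Proof.
rewrite /drop_all.
have -> : foldl (fun C s => (s, drop_level C s) :: C) [::] w = foldl step [::] w by [].
by rewrite foldl_newsr cats0.
Qed.

Lemma hsize_heap_of w : hsize (heap_of w) = size w.
Proof.
rewrite /hsize /heap_of card_imfset //= drop_all_newsr undup_id.
  by rewrite size_rev size_newsr.
by rewrite rev_uniq; apply: pw_uniq; case: (newsr_valid [::] w).
Qed.

Definition keyle (x y : placed) : bool := x.2 <= y.2.
Definition can (p : {fset placed}) : seq int := map fst (sort keyle (enum_fset p)).

Lemma keyle_total : total keyle.
Proof. by move=> x y; rewrite /keyle leq_total. Qed.
Lemma keyle_trans : transitive keyle.
Proof. by move=> x y z; rewrite /keyle; apply: leq_trans. Qed.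

Lemma can_ok p : is_heap p -> newsr [::] (can p) = sort keyle (enum_fset p).
Proof.
move=> [w hw]; set S := sort keyle (enum_fset p).
set L := newsr [::] w; have [vL pL] := newsr_valid [::] w.
have uL := pw_uniq pL.
have mS : forall x, (x \in S) = (x \in L) by move=> x; rewrite mem_sort -mem_heap_of hw.
have pe : perm_eq L S.
  apply: uniq_perm; first exact: uL.
    by rewrite sort_uniq; apply: fset_uniq.
  by move=> x; rewrite mS.
change (newsr [::] (map fst S) = S); apply: valid_newsr; first exact: valid_perm vL.
have h2 : pairwise (fun x y => keyle x y && (x != y)) S.
  rewrite pairwise_relI -sorted_pairwise; last exact: keyle_trans.
  by rewrite sort_sorted; [rewrite -uniq_pairwise sort_uniq fset_uniq|exact: keyle_total].
apply: (@sub_in_pairwise _ (mem L) _ _ _ S); last exact: h2.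
- move=> x y hx hy /andP [hk hne]; rewrite /Rel; apply/implyP => hc.
  have := pw_conc_lt pL hx hy hne hc; by rewrite ltn_neqAle => ->.
- by apply/allP => x; rewrite mS.
Qed.

Lemma heap_can p : is_heap p -> heap_of (can p) = p.
Proof.
move=> hp; apply/fsetP => x; rewrite mem_heap_of can_ok // mem_sort; by [].
Qed.

Lemma size_can p : size (can p) = #|` p|.
Proof. by rewrite /can size_map size_sort. Qed.

Lemma pyr_card (H : {fset placed}) (c : int) : (c, 0) \in H ->
  (#|` [fset x in H | x.2 == 0] | = 1) <-> (forall x, x \in H -> x.2 = 0 -> x = (c, 0)).
Proof.
move=> hc; split.
  move/eqP/cardfs1P => [y hy] x hx h0.
  have e1 : x \in [fset x in H | x.2 == 0] by rewrite !inE /= h0 eqxx andbT; exact: hx.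
  have e2 : (c, 0) \in [fset x in H | x.2 == 0] by rewrite !inE /= eqxx andbT; exact: hc.
  by move: e1 e2; rewrite hy !inE => /eqP -> /eqP ->.
move=> h; have -> : [fset x in H | x.2 == 0] = [fset (c, 0)].
  apply/fsetP => x; rewrite !inE; apply/andP/eqP => [[hx /eqP h0]|->]; first exact: h.
  by rewrite hc eqxx.
exact: cardfs1.
Qed.

Lemma pyr_word w c' : is_pyramid (heap_of w) -> bottom_at (heap_of w) c' ->
  [/\ 0 < size w, nth 0%R w 0 = c' &
    forall i, 0 < i < size w -> has (fun t => concurrent t (nth 0%R w i)) (take i w)].
Proof.
move=> [_ hcard] hb; move: hcard; rewrite (pyr_card hb) => h0.
set LK := newsr [::] w.
have uK : uniq LK by apply: pw_uniq; case: (newsr_valid [::] w).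
have szK : size LK = size w by rewrite size_newsr.
have hs : 0 < size w.
  move: hb; rewrite /bottom_at mem_heap_of; case: w {h0 LK uK szK} => //.
have n0 : nth (0%R, 0) LK 0 = (c', 0).
  apply: h0; first by rewrite mem_heap_of mem_nth // szK.
  by rewrite nth_newsr //= take0 /drop_level big_nil.
split => //; first by move: n0; rewrite nth_newsr // => -[].
move=> i /andP [hi0 hi]; apply: contraTT hi0 => hn.
have : ~~ (0 < (nth (0%R, 0) LK i).2) by rewrite lvl_pos // (negbTE hn).
rewrite -eqn0Ngt => /eqP hz.
have e : nth (0%R, 0) LK i = nth (0%R, 0) LK 0.
  by rewrite n0; apply: h0 => //; rewrite mem_heap_of mem_nth // szK.
by move/eqP: e; rewrite nth_uniq // ?szK // => /eqP ->.
Qed.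


Definition sideS (b : bool) (t : int) : bool := if b then (0 <= t)%R else (t <= -1)%R.
Definition cb (b : bool) : int := if b then 0%R else (-1)%R.

Lemma side_c b : sideS b (cb b).
Proof. by case: b. Qed.
Lemma side_neg b t : sideS (~~ b) t = ~~ sideS b t.
Proof. case: b; rewrite /sideS /=; apply/idP/idP; lia. Qed.
Lemma nside_c' b : ~~ sideS b (cb (~~ b)).
Proof. by rewrite -side_neg side_c. Qed.
Lemma cross b s t : sideS b s -> ~~ sideS b t -> concurrent s t -> s = cb b /\ t = cb (~~ b).
Proof. case: b; rewrite /sideS /cb /concurrent /a /= => h1 h2 /andP [h3 h4]; split; lia. Qed.
Lemma conc_cc b : concurrent (cb b) (cb (~~ b)).
Proof. by case: b. Qed.

Definition spyr b (p : {fset placed}) :=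
  is_pyramid p /\ bottom_at p (cb b) /\ (forall x, x \in p -> sideS b x.1).
Definition pyrc b m (H : {fset placed}) :=
  is_pyramid H /\ bottom_at H (cb b) /\ hsize H = m.

Lemma sorted_Rel (s : seq placed) : uniq s ->
  (forall x y, x \in s -> y \in s -> x != y -> concurrent x.1 y.1 -> x.2 != y.2) ->
  pairwise Rel (sort keyle s).
Proof.
move=> hu hd.
have h2 : pairwise (fun x y => keyle x y && (x != y)) (sort keyle s).
  rewrite pairwise_relI -sorted_pairwise; last exact: keyle_trans.
  by rewrite sort_sorted; [rewrite -uniq_pairwise sort_uniq|exact: keyle_total].
apply: (@sub_in_pairwise _ (mem s) _ _ _ (sort keyle s)); last exact: h2.
- move=> x y hx hy /andP [hk hne]; rewrite /Rel; apply/implyP => hc.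
  have := hd x y hx hy hne hc; by rewrite ltn_neqAle => ->.
- by apply/allP => x; rewrite mem_sort.
Qed.

Lemma mem_pos (T : eqType) (x : T) s : x \in s -> 0 < size s.
Proof. by case: s. Qed.

Lemma pyr_comp b P w : spyr b P -> is_pyramid (heap_of w) -> bottom_at (heap_of w) (cb (~~ b)) ->
  pyrc b (#|` P| + size w) (heap_of (can P ++ w)).
Proof.
move=> [[hP hPc] [hPb hPs]] hK hKb.
have [hs hw0 hwi] := pyr_word hK hKb.
move: hPc; rewrite (pyr_card hPb) => hP0.
set TP := sort keyle (enum_fset P).
set LQ := newsr (rev TP ++ [::]) w.
have e : newsr [::] (can P ++ w) = TP ++ LQ by rewrite newsr_cat can_ok.
have hmem : forall y, (y \in heap_of (can P ++ w)) = (y \in TP) || (y \in LQ).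
  by move=> y; rewrite mem_heap_of e mem_cat.
have hbot : (cb b, 0) \in heap_of (can P ++ w) by rewrite hmem mem_sort; apply/orP; left; exact: hPb.
split; last split => //; last by rewrite hsize_heap_of size_cat size_can.
split; first by exists (can P ++ w).
rewrite (pyr_card hbot) => y; rewrite hmem => /orP [hy|hy] h0.
  by apply: hP0 => //; move: hy; rewrite mem_sort.
have [i hi ei] := nthP (0%R, 0) hy.
have szq : size LQ = size w by rewrite size_newsr.
rewrite szq in hi.
have : 0 < (nth (0%R, 0) LQ i).2.
  rewrite lvl_pos //; case: i hi ei => [|i] hi ei.
    apply/orP; right; apply/hasP; exists (cb b, 0); first by rewrite cats0 mem_rev mem_sort.
    by rewrite /= hw0 conc_cc.
  by rewrite hwi.
by rewrite ei h0.
Qed.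

Inductive above (H : {fset placed}) (x : placed) : placed -> Prop :=
| ab_refl : above H x x
| ab_step y z : above H x y -> z \in H -> concurrent y.1 z.1 -> y.2 < z.2 -> above H x z.

Lemma above_le H x y : above H x y -> y = x \/ x.2 < y.2.
Proof.
elim => [|y' z _ [->|h] _ _ hl]; [by left|by right|right]; exact: ltn_trans hl.
Qed.

Lemma above_in H x y : x \in H -> above H x y -> y \in H.
Proof. by move=> hx; case. Qed.

Lemma above_inv H x z : above H x z -> z = x \/
  exists y, [/\ above H x y, concurrent y.1 z.1 & y.2 < z.2].
Proof. case => [|y z' h1 _ h3 h4]; [by left|right; by exists y]. Qed.

Definition pb (P : Prop) : bool := if excluded_middle_informative P then true else false.
Lemma pbP (P : Prop) : reflect P (pb P).
Proof. by rewrite /pb; case: excluded_middle_informative => h; constructor. Qed.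


Lemma uq_aux b P w : spyr b P -> is_pyramid (heap_of w) -> bottom_at (heap_of w) (cb (~~ b)) ->
  let H := heap_of (can P ++ w) in
  let LQ := newsr (rev (sort keyle (enum_fset P)) ++ [::]) w in
  let x := nth (0%R, 0) LQ 0 in
  [/\ x \in H, ~~ sideS b x.1,
      forall y, (y \in LQ) = (y \in H) && (y \notin P),
      forall y, above H x y <-> y \in LQ &
      forall y, y \in P -> y \in H].
Proof.
move=> [[hP hPc] [hPb hPs]] hK hKb H LQ x.
have [hs hw0 hwi] := pyr_word hK hKb.
set TP := sort keyle (enum_fset P).
have e : newsr [::] (can P ++ w) = TP ++ LQ by rewrite newsr_cat can_ok.
have [_ pT] := newsr_valid [::] (can P ++ w); rewrite e in pT.
have uT := pw_uniq pT.
move: (uT); rewrite cat_uniq => /and3P [_ hdis _].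
move: (pT); rewrite pairwise_cat => /and3P [hall _ pQ].
have hmem : forall y, (y \in H) = (y \in TP) || (y \in LQ).
  by move=> y; rewrite /H mem_heap_of e mem_cat.
have mTP : forall y, (y \in TP) = (y \in P) by move=> y; rewrite mem_sort.
have szq : size LQ = size w by rewrite size_newsr.
have xQ : x \in LQ by rewrite /x mem_nth // szq.
have hc : forall y, (y \in LQ) = (y \in H) && (y \notin P).
  move=> y; rewrite hmem -mTP; case hy: (y \in LQ); last by rewrite orbF andbN.
  rewrite orbT andTb; symmetry; apply/negP => hyT; move/hasP: hdis; apply; by exists y.
split => //; last by move=> y hy; rewrite hmem mTP hy.
- by rewrite hmem xQ orbT.
- by rewrite /x nth_newsr //= hw0 nside_c'.
move=> y; split.
  elim => // y' z _ ih hz hcz hl.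
  move: hz; rewrite hmem => /orP [hzT|//].
  move/allrelP: hall => /(_ z y' hzT ih); rewrite /Rel concC hcz /= => hlt.
  by move: (ltn_trans hlt hl); rewrite ltnn.
move=> hy; have [i hi <-] := nthP (0%R, 0) hy.
elim/ltn_ind: i hi {hy} => i IH hi.
case: i IH hi => [|i] IH hi; first exact: ab_refl.
rewrite szq in hi.
have := hwi i.+1 hi; case/hasP => t ht hct.
have [j hj ej] := nthP 0%R ht.
rewrite size_take hi in hj.
rewrite nth_take // in ej.
have hjw : j < size w by apply: ltn_trans hj hi.
apply: (@ab_step _ _ (nth (0%R, 0) LQ j)).
- by apply: IH => //; rewrite szq.
- by rewrite hmem mem_nth ?orbT // szq.
- by rewrite !nth_newsr //= ej.
- move/(pairwiseP (0%R, 0)): pQ => pQ'.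
  have := pQ' j i.+1; rewrite !inE /= szq => /(_ hjw hi hj).
  by rewrite /Rel !nth_newsr //= ej hct.
Qed.

Lemma uniqdec b P1 P2 w1 w2 : spyr b P1 -> spyr b P2 ->
  is_pyramid (heap_of w1) -> bottom_at (heap_of w1) (cb (~~ b)) ->
  is_pyramid (heap_of w2) -> bottom_at (heap_of w2) (cb (~~ b)) ->
  heap_of (can P1 ++ w1) = heap_of (can P2 ++ w2) ->
  P1 = P2 /\ heap_of w1 = heap_of w2.
Proof.
move=> s1 s2 k1 b1 k2 b2 eH.
have := uq_aux s1 k1 b1; rewrite /= eH.
set H := heap_of (can P2 ++ w2).
set LQ1 := newsr _ w1; set x1 := nth _ LQ1 0 => -[x1H x1S hc1 hd1 hi1].
have := uq_aux s2 k2 b2; rewrite /= -/H.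
set LQ2 := newsr _ w2; set x2 := nth _ LQ2 0 => -[x2H x2S hc2 hd2 hi2].
have [_ [_ hP1s]] := s1; have [_ [_ hP2s]] := s2.
have nP : forall P : {fset placed}, (forall x, x \in P -> sideS b x.1) -> forall y, ~~ sideS b y.1 -> y \notin P.
  by move=> P hPs y hy; apply/negP => /hPs hs; move: hy; rewrite hs.
have a12 : above H x1 x2 by apply/hd1; rewrite hc1 x2H nP.
have a21 : above H x2 x1 by apply/hd2; rewrite hc2 x1H nP.
have ex : x1 = x2.
  case: (above_le a12) => // h; case: (above_le a21) => // h'.
  by move: (ltn_trans h h'); rewrite ltnn.
have eQ : forall y, (y \in LQ1) = (y \in LQ2).
  move=> y; apply/idP/idP => h.
    by apply/hd2; rewrite -ex; apply/hd1.
  by apply/hd1; rewrite ex; apply/hd2.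
have eP : P1 = P2.
  apply/fsetP => y; case hyH: (y \in H).
    have := hc1 y; have := hc2 y; rewrite eQ hyH /= => -> /negb_inj.
    by move=> ->.
  case h1: (y \in P1); first by rewrite (hi1 y h1) in hyH.
  case h2: (y \in P2) => //; by rewrite (hi2 y h2) in hyH.
split => //.
move: eQ; rewrite /LQ2 -eP => eQ.
have := TR [::] eQ => eK.
by apply/fsetP => y; rewrite !mem_heap_of eK.
Qed.


Lemma dec b m H : pyrc b m H -> (exists2 y, y \in H & ~~ sideS b y.1) ->
  exists P w, (spyr b P /\ is_pyramid (heap_of w) /\ bottom_at (heap_of w) (cb (~~ b))) /\
     (0 < size (can P)) /\ ((size (can P) + size w)%N = m) /\ (heap_of (can P ++ w) = H).
Proof.
move=> [[[w0 hw0] hcard] [hb hsz]] [y0 hy0 hy0S].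
move: hcard; rewrite (pyr_card hb) => hl0.
set L0 := newsr [::] w0; have [vL pL] := newsr_valid [::] w0.
have uL := pw_uniq pL.
have mH : forall y, (y \in H) = (y \in L0) by move=> y; rewrite -hw0 mem_heap_of.
have sup : forall y, y \in H -> 0 < y.2 ->
    exists2 z, z \in H & concurrent z.1 y.1 /\ z.2 < y.2.
  move=> y; rewrite mH => hy hpos.
  have [_ e] := vL y hy.
  move: hpos; rewrite {1}e => /dl_support [z hz [hc _]].
  move: hz; rewrite /= mem_filter => /andP [hlt hz].
  by exists z; [rewrite mH|split].
have dist : forall y z, y \in H -> z \in H -> y != z -> concurrent y.1 z.1 -> y.2 != z.2.
  move=> y z hy hz; rewrite !mH in hy hz; exact: (pw_conc_lt pL hy hz).
have hex : exists n, has (fun y => ~~ sideS b y.1 && (y.2 == n)) L0.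
  by exists y0.2; apply/hasP; exists y0; rewrite -?mH // hy0S eqxx.
have [x] : exists2 x, x \in H & ~~ sideS b x.1 /\ forall y, y \in H -> ~~ sideS b y.1 -> x.2 <= y.2.
  case: (ex_minnP hex) => n /hasP [x hx /andP [hxS /eqP hxn]] hmin.
  exists x; first by rewrite mH.
  split => // y hy hyS; rewrite hxn; apply: hmin; apply/hasP; exists y; rewrite -?mH //.
  by rewrite hyS eqxx.
move=> hxH [hxS hxmin].
have hxpos : 0 < x.2.
  rewrite lt0n; apply/negP => /eqP h0.
  by move: hxS; rewrite (hl0 x hxH h0) side_c.
have hx1 : x.1 = cb (~~ b).
  have [z hz [hcz hlz]] := sup x hxH hxpos.
  case hzS: (sideS b z.1); first by case: (cross hzS hxS hcz).
  by move: (hxmin z hz (negbT hzS)); rewrite leqNgt hlz.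
have allU : forall y, y \in H -> ~~ sideS b y.1 -> above H x y.
  move=> y; elim/ltn_ind: {y}y.2 {-2}y (erefl y.2) => n IH y hn hy hyS.
  case: (eqVneq y x) => [->|hne]; first exact: ab_refl.
  have hle := hxmin y hy hyS.
  case: (eqVneq y.1 (cb (~~ b))) => hy1.
    apply: (@ab_step _ _ x) => //; first exact: ab_refl.
      by rewrite hx1 hy1 concxx.
    rewrite ltn_neqAle hle andbT; apply: (dist x y) => //; first by rewrite eq_sym.
    by rewrite hx1 hy1 concxx.
  have [z hz [hcz hlz]] := sup y hy (leq_trans hxpos hle).
  case hzS: (sideS b z.1); first by case: (cross hzS hyS hcz) => _ /eqP; rewrite (negbTE hy1).
  apply: (@ab_step _ _ z) => //; apply: (IH z.2) => //; [by rewrite -hn|by rewrite hzS].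
pose ab y := pb (above H x y).
have abP : forall y, reflect (above H x y) (ab y) by move=> y; apply: pbP.
set P := [fset y in H | ~~ ab y].
have mP : forall y, (y \in P) = (y \in H) && ~~ ab y.
  move=> y; rewrite !inE /=. by [].
set Ul := sort keyle [seq y <- enum_fset H | ab y].
set w := map fst Ul.
set TP := sort keyle (enum_fset P).
have mTP : forall y, (y \in TP) = (y \in P) by move=> y; rewrite mem_sort.
have mU : forall y, (y \in Ul) = (y \in H) && ab y.
  by move=> y; rewrite mem_sort mem_filter andbC.
have uU : uniq Ul by rewrite sort_uniq filter_uniq // fset_uniq.
have pTP : pairwise Rel TP.
  apply: sorted_Rel; first exact: fset_uniq.
  move=> y z hy hz; apply: dist; by [move: hy; rewrite mP => /andP []|move: hz; rewrite mP => /andP []].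
have pU : pairwise Rel Ul.
  apply: sorted_Rel; first by rewrite filter_uniq // fset_uniq.
  move=> y z; rewrite !mem_filter => /andP [_ hy] /andP [_ hz]; exact: dist.
have aR : allrel Rel TP Ul.
  apply/allrelP => p u; rewrite mTP mP mU => /andP [hp hnp] /andP [hu hau].
  rewrite /Rel; apply/implyP => hc.
  have hne : p != u by apply/eqP => e; move: hnp; rewrite e hau.
  case: (ltngtP p.2 u.2) => // h.
    move/negP: hnp; case; apply/abP; apply: (@ab_step _ _ u) => //; first exact/abP.
    by rewrite concC.
  by move: (dist p u hp hu hne hc); rewrite h eqxx.
set T := TP ++ Ul.
have pT : pairwise Rel T by rewrite pairwise_cat aR pTP pU.
have mT : forall y, (y \in T) = (y \in H).
  by move=> y; rewrite mem_cat mTP mU mP; case: (ab y); rewrite ?andbT ?andbF ?orbF ?orbT.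
have uT : uniq T := pw_uniq pT.
have peT : perm_eq L0 T by apply: uniq_perm => // y; rewrite mT mH.
have vT : valid [::] T := valid_perm peT vL.
have eT : newsr [::] (map fst T) = T := valid_newsr vT pT.
rewrite map_cat -/w in eT.
have [eP eU] : newsr [::] (can P) = TP /\ newsr (rev TP ++ [::]) w = Ul.
  move: eT; rewrite newsr_cat => /eqP; rewrite eqseq_cat; last by rewrite size_newsr size_map.
  by move=> /andP [/eqP e1 /eqP e2]; move: e2; rewrite e1.
have hHeq : heap_of (can P ++ w) = H.
  by apply/fsetP => y; rewrite mem_heap_of eT mT.
have hPh : is_heap P by exists (can P); apply/fsetP => y; rewrite mem_heap_of eP mTP.
have bP : (cb b, 0) \in P.
  rewrite mP; apply/andP; split; first exact: hb.
  apply/negP => /abP /above_le [e|h] //.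
  by move: hxS; rewrite -e side_c.
have xU : x \in Ul by rewrite mU hxH; apply/abP; exact: ab_refl.
have kU : pairwise keyle Ul by rewrite -sorted_pairwise ?sort_sorted //; [exact: keyle_total|exact: keyle_trans].
move/(pairwiseP (0%R, 0)): kU => kU.
have hx0 : nth (0%R, 0) Ul 0 = x.
  have u0U : nth (0%R, 0) Ul 0 \in Ul by rewrite mem_nth // (mem_pos xU).
  move: (u0U); rewrite mU => /andP [_ /abP /above_le [//|h]].
  have [j hj ej] := nthP (0%R, 0) xU.
  case: j hj ej => [|j] hj ej; first by rewrite ej.
  have := kU 0 j.+1; rewrite !inE /= (mem_pos xU) hj => /(_ isT isT isT).
  by rewrite /keyle ej leqNgt h.
have szw : size w = size Ul by rewrite size_map.
have hw00 : nth 0%R w 0 = cb (~~ b) by rewrite (nth_map (0%R, 0)) ?hx0 // (mem_pos xU).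
set LK := newsr [::] w.
have uK : uniq LK by apply: pw_uniq; case: (newsr_valid [::] w).
have n0 : nth (0%R, 0) LK 0 = (cb (~~ b), 0).
  by rewrite nth_newsr ?szw ?(mem_pos xU) //= take0 /drop_level big_nil hw00.
have bK : bottom_at (heap_of w) (cb (~~ b)).
  by rewrite /bottom_at mem_heap_of -n0 mem_nth // size_newsr szw (mem_pos xU).
exists P, w; split; last split; last split.
- split; last split => //.
  + split; first split; first exact: hPh.
      by rewrite (pyr_card bP) => y; rewrite mP => /andP [hy _]; exact: hl0.
    split; first exact: bP.
    move=> y hy; apply/negPn/negP => hyS.
    move: hy; rewrite mP => /andP [hy hna].
    by move/negP: hna; apply; apply/abP; apply: allU.
  + split; first by exists w.
    rewrite (pyr_card bK) => y; rewrite mem_heap_of => hy h0.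
    have [i hi ei] := nthP (0%R, 0) hy.
    rewrite size_newsr in hi.
    case: i hi ei => [|i] hi ei; first by rewrite -ei n0.
    have : 0 < (nth (0%R, 0) LK i.+1).2; last by rewrite ei h0.
    rewrite lvl_pos // orbF.
    set ui := nth (0%R, 0) Ul i.+1.
    have uiU : ui \in Ul by rewrite mem_nth // -szw.
    have hne : ui != x.
      rewrite -hx0 nth_uniq // ?(mem_pos xU) //; by rewrite -szw.
    move: (uiU); rewrite mU => /andP [_ /abP /above_inv [e|[y' [hab hc hl]]]].
      by rewrite e eqxx in hne.
    have y'U : y' \in Ul by rewrite mU (above_in hxH hab); apply/abP.
    have [j hj ej] := nthP (0%R, 0) y'U.
    have hji : j < i.+1.
      rewrite ltnNge; apply/negP => hle; move: hle; rewrite leq_eqVlt => /orP [/eqP e|hlt].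
        by move: hl; rewrite -ej -e ltnn.
      have hiU : i.+1 < size Ul by rewrite -szw.
      have := kU i.+1 j hiU hj hlt.
      by rewrite /keyle ej leqNgt hl.
    apply/hasP; exists (nth 0%R w j).
      by rewrite -(nth_take _ hji) mem_nth // size_take hi.
    by rewrite (nth_map (0%R, 0)) // (nth_map (0%R, 0)) -?szw // ej.
- by rewrite /can size_map; apply: (@mem_pos _ (cb b, 0)); rewrite mTP.
- by rewrite -hsz -hHeq hsize_heap_of size_cat.
- exact: hHeq.
Qed.


Fixpoint alt b (ps : seq {fset placed}) : Prop :=
  match ps with
  | [::] => False
  | p :: ps' => spyr b p /\ (ps' = [::] \/ alt (~~ b) ps')
  end.

Definition word (ps : seq {fset placed}) : seq int := flatten (map can ps).

Lemma word_cons p ps : word (p :: ps) = can p ++ word ps.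
Proof. by []. Qed.

Lemma heap_cat_congr u v1 v2 : heap_of v1 = heap_of v2 -> heap_of (u ++ v1) = heap_of (u ++ v2).
Proof.
move=> e.
have e' : newsr [::] v1 =i newsr [::] v2 by move=> y; rewrite -!mem_heap_of e.
have := TR (rev (newsr [::] u) ++ [::]) e' => e2.
by apply/fsetP => y; rewrite !mem_heap_of !newsr_cat !mem_cat e2.
Qed.

Lemma spyr_heap b p : spyr b p -> heap_of (can p) = p.
Proof. by move=> [[hp _] _]; apply: heap_can. Qed.

Lemma MA b ps : alt b ps -> pyrc b (sumn (map hsize ps)) (heap_of (word ps)).
Proof.
elim: ps b => [|p ps IH] b //= [hp [e|ha]].
  subst ps; rewrite /word /= cats0 (spyr_heap hp) addn0.
  by case: hp => [h1 [h2 _]].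
have [k1 [k2 k3]] := IH _ ha.
have := pyr_comp hp k1 k2; rewrite hsize_heap_of in k3.
by rewrite k3.
Qed.

Lemma MB b m H : pyrc b m H ->
  exists ps, [/\ alt b ps, sumn (map hsize ps) = m & heap_of (word ps) = H].
Proof.
elim/ltn_ind: m b H => m IH b H hH.
case: (boolP (all (fun y => sideS b y.1) (enum_fset H))) => hall.
  exists [:: H]; have [h1 [h2 h3]] := hH.
  have hHh : heap_of (can H) = H by case: h1 => ? _; apply: heap_can.
  split.
  - split; last by left.
    split => //; split => //; by move=> x hx; move/allP: hall; apply.
  - by rewrite /= addn0.
  - by rewrite /word /= cats0.
have hex : exists2 y, y \in H & ~~ sideS b y.1.
  by move/allPn: hall => [y hy hyS]; exists y.
have [P [w [[sP [kP bK]] [hp [hs hw]]]]] := dec hH hex.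
have pK : pyrc (~~ b) (size w) (heap_of w) by split => //; split => //; rewrite hsize_heap_of.
have hlt : size w < m by rewrite -hs -{1}(add0n (size w)) ltn_add2r.
have [ps' [a' s' e']] := IH _ hlt _ _ pK.
exists (P :: ps'); split => /=.
- by split => //; right.
- by rewrite s' /hsize -size_can.
- by rewrite word_cons -hw; apply: heap_cat_congr.
Qed.

Lemma MC b ps1 ps2 : alt b ps1 -> alt b ps2 -> heap_of (word ps1) = heap_of (word ps2) -> ps1 = ps2.
Proof.
elim: ps1 b ps2 => [|p1 r1 IH] b [|p2 r2] //= [h1 a1] [h2 a2].
rewrite !word_cons.
have side_contra : forall p q r, spyr b p -> spyr b q -> alt (~~ b) r ->
    heap_of (can p ++ [::]) <> heap_of (can q ++ word r).
  move=> p q r sp sq ar e.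
  have [k1 [k2 _]] := MA ar.
  have [xH xS _ _ _] := uq_aux sq k1 k2.
  move: xH; rewrite -e (cats0 (can p)) (spyr_heap sp) => /(proj2 (proj2 sp)).
  by rewrite (negbTE xS).
case: a1 a2 => [e1|a1] [e2|a2]; subst.
- by rewrite !cats0 (spyr_heap h1) (spyr_heap h2) /word /= => ->.
- by move=> e; exfalso; apply: (side_contra _ _ _ h1 h2 a2); rewrite /word /= in e; rewrite e.
- by move=> e; exfalso; apply: (side_contra _ _ _ h2 h1 a1); rewrite /word /= in e; rewrite e.
move=> e.
have [k1 [k2 _]] := MA a1; have [k1' [k2' _]] := MA a2.
have [ep ew] := uniqdec h1 h2 k1 k2 k1' k2' e.
by rewrite ep (IH _ _ a1 a2 ew).
Qed.


Lemma right_spyr p : right_pyramid 0 p <-> spyr true p.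
Proof. by []. Qed.

Lemma left_spyr p : left_pyramid 1 p <-> spyr false p.
Proof.
rewrite /left_pyramid /spyr /cb /sideS.
have -> : (1 - a)%R = (-1)%R by rewrite /a.
split => -[h1 [h2 h3]]; split => //; split => // x /h3; rewrite /a; lia.
Qed.

Lemma alt_nth b ps : alt b ps <-> (1 <= size ps /\
  forall i, i < size ps -> if odd i.+1 then spyr b (nth fset0 ps i) else spyr (~~ b) (nth fset0 ps i)).
Proof.
elim: ps b => [|p ps IH] b /=; first by split => // -[].
split.
  move=> [hp hr]; split; first by [].
  case=> [|i] hi /=; first exact: hp.
  case: hr => [e|ha]; first by subst ps.
  have [_ h] := (IH (~~ b)).1 ha; move: (h i hi).
  by rewrite negbK /=; case: (odd i).
move=> [_ h]; split; first exact: (h 0).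
case: ps IH h => [|q ps] IH h; first by left.
right; apply/(IH (~~ b)); split => // i hi.
move: (h i.+1 hi); rewrite negbK /=; by case: (odd i).
Qed.

Lemma good_alt m ps : good_seq m ps <-> alt true ps /\ sumn (map hsize ps) = m.
Proof.
rewrite alt_nth /good_seq; split.
  move=> [h1 [h2 h3]]; split => //; split => // i hi; move: (h2 i hi).
  by case: (odd i.+1); [rewrite right_spyr|rewrite left_spyr].
move=> [[h1 h2] h3]; split => //; split => // i hi; move: (h2 i hi).
by case: (odd i.+1); [rewrite right_spyr|rewrite left_spyr].
Qed.

Theorem lemma1 (m : nat) (hm : (1 <= m)%N) :
  exists f : {fset placed} -> seq {fset placed},
    (forall H, pyr0 m H -> good_seq m (f H)) /\
    (forall H1 H2, pyr0 m H1 -> pyr0 m H2 -> f H1 = f H2 -> H1 = H2) /\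
    (forall ps, good_seq m ps -> exists H, pyr0 m H /\ f H = ps).
Proof.
pose Q H ps := good_seq m ps /\ heap_of (word ps) = H.
pose f H := match excluded_middle_informative (exists ps, Q H ps) with
  | left e => proj1_sig (constructive_indefinite_description _ e)
  | right _ => [::] end.
have fP : forall H, (exists ps, Q H ps) -> Q H (f H).
  move=> H e; rewrite /f; case: excluded_middle_informative => // e'.
  exact: proj2_sig (constructive_indefinite_description _ e').
have ex : forall H, pyr0 m H -> exists ps, Q H ps.
  move=> H hH; have [ps [a s e]] := MB (hH : pyrc true m H).
  by exists ps; split => //; apply/good_alt.
exists f; split; last split.
- by move=> H /ex /fP [].
- move=> H1 H2 /ex /fP [_ e1] /ex /fP [_ e2] e.
  by rewrite -e1 -e2 e.
- move=> ps hps; have [a s] := (good_alt m ps).1 hps.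
  have hH : pyr0 m (heap_of (word ps)).
    by have := MA a; rewrite s.
  exists (heap_of (word ps)); split => //.
  have [hg he] := fP _ (ex _ hH).
  have [a' _] := (good_alt m _).1 hg.
  exact: MC a' a he.
Qed.
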